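(* Let $d=\mu_+-\mu_-$. For every $\epsilon\in[0,d/2]$ and every $K\in(1,B_K(\epsilon)]$, where $B_K(\epsilon)=\min\{\exp((d-2\epsilon)^2/2),\ d/\epsilon-1\}$ ($d/\epsilon:=+\infty$ if $\epsilon=0$), $$\mathbb E\big[|X-\theta^{(\epsilon)}_{\mathrm r}|\big]\;\ge\;\mathbb E\big[|X-\theta^*|\big]\;\ge\;\mathbb E\big[|X-\theta_{\mathrm f}|\big].$$ Moreover, $\theta_{\mathrm f}=\operatorname{argmin}_{\theta\in[\mu_-,\mu_+]}\mathbb E\big[|X-\theta|\big]$, i.e. the fair threshold minimizes the average distance to the decision boundary over all thresholds in $[\mu_-,\mu_+]$.
   Context: Setting (one-dimensional Gaussian mixture). Fix real numbers $\mu_-<\mu_+$ and $K>1$, and let $d=\mu_+-\mu_-$. Let $(X,Y)$ be a random pair with $\Pr(Y=1)=\Pr(Y=-1)=\tfrac12$, $X\mid Y=-1\sim\mathcal N(\mu_-,1)$, and $X\mid Y=1\sim\mathcal N(\mu_+,K^2)$; expectations are over this joint distribution. For $\theta\in\mathbb R$, $f_\theta(x)=1$ if $x>\theta$ and $f_\theta(x)=-1$ otherwise; the distance of $X$ to the decision boundary of $f_\theta$ is $|X-\theta|$. Class-conditional errors: $e_+(\theta)=\Pr(X\le\theta\mid Y=1)$, $e_-(\theta)=\Pr(X>\theta\mid Y=-1)$. Natural error: $R_{\mathrm{nat}}(\theta)=\tfrac12 e_+(\theta)+\tfrac12 e_-(\theta)$. For $\epsilon\ge0$, robust error: $R_{\mathrm{rob}}^{\epsilon}(\theta)=\tfrac12\Pr(X\le\theta+\epsilon\mid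 Y=1)+\tfrac12\Pr(X>\theta-\epsilon\mid Y=-1)$. Optimal models: $\theta^*$ minimizes $R_{\mathrm{nat}}$ over $[\mu_-,\mu_+]$; $\theta_{\mathrm f}$ is the threshold in $[\mu_-,\mu_+]$ with $e_+(\theta_{\mathrm f})=e_-(\theta_{\mathrm f})$; $\theta^{(\epsilon)}_{\mathrm r}$ minimizes $R^{\epsilon}_{\mathrm{rob}}$ over $[\mu_-,\mu_+]$. *)

(* Defs.v *)
From Stdlib Require Import Reals.
From Coquelicot Require Import Coquelicot.
Open Scope R_scope.

Definition gauss_pdf (m s x : R) : R :=
  exp (- (x - m) ^ 2 / (2 * s ^ 2)) / (s * sqrt (2 * PI)).

Definition pdf_neg (mu_m : R) (x : R) : R := gauss_pdf mu_m 1 x.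
Definition pdf_pos (mu_p K : R) (x : R) : R := gauss_pdf mu_p K x.

Definition prob_pos_le (mu_p K t : R) : R :=
  RInt_gen (pdf_pos mu_p K) (Rbar_locally m_infty) (at_point t).
Definition prob_neg_gt (mu_m t : R) : R :=
  RInt_gen (pdf_neg mu_m) (at_point t) (Rbar_locally p_infty).

Definition e_pos (mu_p K theta : R) : R := prob_pos_le mu_p K theta.
Definition e_neg (mu_m theta : R) : R := prob_neg_gt mu_m theta.

Definition R_nat (mu_m mu_p K theta : R) : R :=
  / 2 * e_pos mu_p K theta + / 2 * e_neg mu_m theta.

Definition R_rob (mu_m mu_p K eps theta : R) : R :=
  / 2 * prob_pos_le mu_p K (theta + eps) + / 2 * prob_neg_gt mu_m (theta - eps).

(* E[g(X)] under the joint distribution (Pr(Y = +-1) = 1/2). *)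
Definition expect (mu_m mu_p K : R) (g : R -> R) : R :=
  / 2 * RInt_gen (fun x => g x * pdf_neg mu_m x)
          (Rbar_locally m_infty) (Rbar_locally p_infty)
  + / 2 * RInt_gen (fun x => g x * pdf_pos mu_p K x)
          (Rbar_locally m_infty) (Rbar_locally p_infty).

Definition avg_dist (mu_m mu_p K theta : R) : R :=
  expect mu_m mu_p K (fun x => Rabs (x - theta)).

Definition is_min_on (F : R -> R) (a b theta : R) : Prop :=
  a <= theta <= b /\ forall t, a <= t <= b -> F theta <= F t.

(* Main.v *)
Require Import Defs.
From Stdlib Require Import Reals Lra Psatz Classical.
From Coquelicot Require Import Coquelicot.
Open Scope R_scope.


Definition lim_pinf (F : R -> R) (L : R) :=
  forall eps, 0 < eps -> exists M, forall x, M < x -> Rabs (F x - L) < eps.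
Definition lim_minf (F : R -> R) (L : R) :=
  forall eps, 0 < eps -> exists M, forall x, x < M -> Rabs (F x - L) < eps.

Lemma ball_R (L e y : R) : ball L e y <-> Rabs (y - L) < e.
Proof. unfold ball; simpl; unfold AbsRing_ball, minus, plus, opp, abs; simpl. tauto. Qed.

Lemma gen_of_lim_pinf f c L : (forall b, ex_RInt f c b) ->
  lim_pinf (fun b => RInt f c b) L ->
  is_RInt_gen f (at_point c) (Rbar_locally p_infty) L.
Proof.
  intros Hex Hl P [eps HP].
  destruct (Hl eps (cond_pos eps)) as [M HM].
  apply Filter_prod with (fun a => a = c) (fun b => M < b).
  - reflexivity.
  - exists M; auto.
  - intros a b -> Hb. simpl. exists (RInt f c b). split.
    + apply RInt_correct, Hex.
    + apply HP. apply ball_R. auto.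
Qed.

Lemma gen_of_lim_minf f c L : (forall a, ex_RInt f a c) ->
  lim_minf (fun a => RInt f a c) L ->
  is_RInt_gen f (Rbar_locally m_infty) (at_point c) L.
Proof.
  intros Hex Hl P [eps HP].
  destruct (Hl eps (cond_pos eps)) as [M HM].
  apply Filter_prod with (fun a => a < M) (fun b => b = c).
  - exists M; auto.
  - reflexivity.
  - intros a b Ha ->. simpl. exists (RInt f a c). split.
    + apply RInt_correct, Hex.
    + apply HP. apply ball_R. auto.
Qed.

Lemma lim_of_gen_pinf f c L : (forall b, ex_RInt f c b) ->
  is_RInt_gen f (at_point c) (Rbar_locally p_infty) L ->
  lim_pinf (fun b => RInt f c b) L.
Proof.
  intros Hex Hg eps Heps.
  assert (H := Hg (ball L (mkposreal eps Heps))).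
  destruct H as [Q R0 HQ HR HP].
  - now exists (mkposreal eps Heps).
  - destruct HR as [M HM]. exists M. intros x Hx.
    destruct (HP c x HQ (HM x Hx)) as [y [Hy Hb]]. simpl in Hy.
    apply is_RInt_unique in Hy. rewrite Hy. now apply ball_R in Hb.
Qed.

Lemma lim_of_gen_minf f c L : (forall a, ex_RInt f a c) ->
  is_RInt_gen f (Rbar_locally m_infty) (at_point c) L ->
  lim_minf (fun a => RInt f a c) L.
Proof.
  intros Hex Hg eps Heps.
  assert (H := Hg (ball L (mkposreal eps Heps))).
  destruct H as [Q R0 HQ HR HP].
  - now exists (mkposreal eps Heps).
  - destruct HQ as [M HM]. exists M. intros x Hx.
    destruct (HP x c (HM x Hx) HR) as [y [Hy Hb]]. simpl in Hy.
    apply is_RInt_unique in Hy. rewrite Hy. now apply ball_R in Hb.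
Qed.

Lemma mono_lim_pinf F B : (forall x y, x <= y -> F x <= F y) ->
  (forall x, F x <= B) -> exists L, lim_pinf F L.
Proof.
  intros Hm HB.
  destruct (completeness (fun r => exists x, r = F x)) as [m [Hub Hlub]].
  - exists B. intros r [x ->]. apply HB.
  - exists (F 0), 0. reflexivity.
  - exists m. intros eps Heps.
    destruct (classic (exists x, m - eps < F x)) as [[x0 Hx0]|Hn].
    + exists x0. intros x Hx.
      assert (F x0 <= F x) by (apply Hm; lra).
      assert (F x <= m) by (apply Hub; now exists x).
      apply Rabs_def1; lra.
    + exfalso. assert (m <= m - eps); [|lra].
      apply Hlub. intros r [x ->]. apply Rnot_lt_le. intro H. apply Hn. now exists x.
Qed.

Lemma mono_lim_minf F B : (forall x y, x <= y -> F y <= F x) ->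
  (forall x, F x <= B) -> exists L, lim_minf F L.
Proof.
  intros Hm HB.
  destruct (mono_lim_pinf (fun x => F (- x)) B) as [L HL].
  - intros x y H. apply Hm. lra.
  - intros; apply HB.
  - exists L. intros eps Heps. destruct (HL eps Heps) as [M HM].
    exists (- M). intros x Hx. replace x with (- - x) by ring. apply HM. lra.
Qed.


Section Exist.
Variable f : R -> R.
Hypothesis Hc : forall x, continuous f x.
Hypothesis Hpos : forall x, 0 <= f x.
Variable B : R.
Hypothesis HB : forall a b, a <= b -> RInt f a b <= B.

Lemma exf a b : ex_RInt f a b.
Proof. apply (ex_RInt_continuous (V:=R_CompleteNormedModule)); auto. Qed.

Lemma chas a b c : RInt f a b + RInt f b c = RInt f a c.
Proof. apply (RInt_Chasles f); apply exf. Qed.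

Lemma RInt_nonneg a b : a <= b -> 0 <= RInt f a b.
Proof. intros; apply RInt_ge_0; auto using exf. Qed.

Lemma swapf a b : RInt f a b = - RInt f b a.
Proof. rewrite <- (opp_RInt_swap f) by apply exf. unfold opp; simpl; ring. Qed.

Lemma ex_pinf c : exists L, is_RInt_gen f (at_point c) (Rbar_locally p_infty) L.
Proof.
  destruct (mono_lim_pinf (fun b => RInt f c b) (Rmax B 0)) as [L HL].
  - intros x y H. rewrite <- (chas c x y). assert (0 <= RInt f x y) by (apply RInt_nonneg; auto). lra.
  - intros x. destruct (Rle_dec c x).
    + apply Rle_trans with B; [apply HB; auto| apply Rmax_l].
    + rewrite swapf. assert (0 <= RInt f x c) by (apply RInt_nonneg; lra).
      apply Rle_trans with 0; [lra|apply Rmax_r].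
  - exists L. apply gen_of_lim_pinf; auto using exf.
Qed.

Lemma ex_minf c : exists L, is_RInt_gen f (Rbar_locally m_infty) (at_point c) L.
Proof.
  destruct (mono_lim_minf (fun a => RInt f a c) (Rmax B 0)) as [L HL].
  - intros x y H. rewrite <- (chas x y c). assert (0 <= RInt f x y) by (apply RInt_nonneg; auto). lra.
  - intros x. destruct (Rle_dec x c).
    + apply Rle_trans with B; [apply HB; auto| apply Rmax_l].
    + rewrite swapf. assert (0 <= RInt f c x) by (apply RInt_nonneg; lra).
      apply Rle_trans with 0; [lra|apply Rmax_r].
  - exists L. apply gen_of_lim_minf; auto using exf.
Qed.
End Exist.

Lemma gen_le (Fa Fb : (R -> Prop) -> Prop) (FFa : ProperFilter Fa) (FFb : ProperFilter Fb) (f g : R -> R) (lf lg : R) :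
  filter_prod Fa Fb (fun ab => fst ab <= snd ab) ->
  filter_prod Fa Fb (fun ab => forall x, fst ab <= x <= snd ab -> f x <= g x) ->
  is_RInt_gen f Fa Fb lf -> is_RInt_gen g Fa Fb lg -> lf <= lg.
Proof.
  intros Hab Hfg Hf Hg.
  assert (H0 : is_RInt_gen (fun y => 0 * (f y)) Fa Fb (0 * lf)).
  { exact (@is_RInt_gen_scal R_NormedModule Fa Fb _ _ f 0 lf Hf). }
  assert (H1 : is_RInt_gen (fun y => g y - f y) Fa Fb (lg - lf)).
  { exact (@is_RInt_gen_minus R_NormedModule Fa Fb _ _ g f lg lf Hg Hf). }
  assert (Hfg' : filter_prod Fa Fb (fun ab => forall x, fst ab <= x <= snd ab ->
      Rabs (0 * f x) <= g x - f x)).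
  { eapply filter_imp; [|exact Hfg]. intros ab H x Hx. specialize (H x Hx).
    rewrite Rmult_0_l, Rabs_R0. lra. }
  assert (H := @RInt_gen_norm R_CompleteNormedModule Fa Fb FFa FFb _ _ _ _ Hab Hfg' H0 H1).
  change (Rabs (0 * lf) <= lg - lf) in H.
  rewrite Rmult_0_l, Rabs_R0 in H. lra.
Qed.


Lemma exp_ge1 y : 0 <= y -> 1 + y <= exp y.
Proof.
  intros H. destruct (Req_dec y 0) as [->|Hn].
  - rewrite exp_0; lra.
  - left; apply exp_ineq1; lra.
Qed.

Lemma core_bd u : (1 + Rabs u) * exp (- (u ^ 2) / 2) <= 18 / (1 + u ^ 2).
Proof.
  assert (He : exp (u ^ 2 / 2) = exp (u^2/4) * exp (u^2/4)).
  { rewrite <- exp_plus. f_equal. field. }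
  assert (H1 : 1 + u^2/4 <= exp (u^2/4)) by (apply exp_ge1; nra).
  assert (H2 : (1 + u^2/4) * (1 + u^2/4) <= exp (u ^ 2 / 2)).
  { rewrite He. apply Rmult_le_compat; nra. }
  replace (- (u ^ 2) / 2) with (- (u^2/2)) by field. rewrite exp_Ropp.
  set (E := exp (u^2/2)) in *.
  assert (HE : 0 < E) by apply exp_pos.
  set (w := Rabs u).
  assert (Hw : 0 <= w) by apply Rabs_pos.
  assert (Hu2 : u ^ 2 = w ^ 2) by (unfold w; rewrite <- Rsqr_pow2 at 1; rewrite <- Rsqr_pow2; now rewrite Rsqr_abs).
  rewrite Hu2 in *.
  apply Rmult_le_reg_r with (E * (1 + w^2)).
  { apply Rmult_lt_0_compat; nra. }
  replace ((1 + w) * / E * (E * (1 + w ^ 2))) with ((1+w)*(1+w^2)) by (field; lra).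
  replace (18 / (1 + w ^ 2) * (E * (1 + w ^ 2))) with (18 * E) by (field; nra).
  nra.
Qed.


Lemma exd_cont (f : R -> R) (x : R) : ex_derive f x -> continuous f x.
Proof. exact (@ex_derive_continuous R_AbsRing R_NormedModule f x). Qed.

Lemma s2pi_pos : 0 < sqrt (2 * PI).
Proof. apply sqrt_lt_R0. generalize PI_RGT_0; lra. Qed.

Lemma gauss_alt m s x : 0 < s ->
  gauss_pdf m s x = exp (- (((x - m) / s) ^ 2) / 2) / (s * sqrt (2 * PI)).
Proof. intros Hs. unfold gauss_pdf. f_equal. f_equal. field. lra. Qed.

Lemma gauss_pos m s x : 0 < s -> 0 < gauss_pdf m s x.
Proof.
  intros Hs. unfold gauss_pdf. apply Rdiv_lt_0_compat. apply exp_pos.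
  apply Rmult_lt_0_compat; auto using s2pi_pos.
Qed.

Lemma gauss_cont m s x : 0 < s -> continuous (gauss_pdf m s) x.
Proof.
  intros Hs. apply exd_cont. unfold gauss_pdf. auto_derive.
  assert (0 < s * sqrt (2 * PI)) by (apply Rmult_lt_0_compat; auto using s2pi_pos).
  exact I.
Qed.

Lemma maj_cont m s x : 0 < s -> continuous (fun x => / (1 + ((x - m) / s) ^ 2)) x.
Proof.
  intros Hs. apply exd_cont. auto_derive. apply Rgt_not_eq. apply Rplus_lt_le_0_compat; [lra|]. rewrite Rmult_1_r. apply Rle_0_sqr.
Qed.

Lemma maj_int m s a b : 0 < s ->
  is_RInt (fun x => / (1 + ((x - m) / s) ^ 2)) a b
    (s * atan ((b - m) / s) - s * atan ((a - m) / s)).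
Proof.
  intros Hs.
  apply (is_RInt_derive (V:=R_CompleteNormedModule) (fun x => s * atan ((x - m) / s))).
  - intros x _. auto_derive; [exact I|].
    assert (0 < 1 + ((x - m) / s) ^ 2) by (apply Rplus_lt_le_0_compat; [lra| apply pow2_ge_0]).
    field. split; [lra|]. apply Rgt_not_eq. assert (0 < s^2) by (apply pow_lt; lra). assert (0 <= (x-m)^2) by apply pow2_ge_0. lra.
  - intros y _. apply maj_cont; auto.
Qed.

Lemma maj_bound m s a b : 0 < s -> a <= b ->
  RInt (fun x => / (1 + ((x - m) / s) ^ 2)) a b <= s * PI.
Proof.
  intros Hs Hab. rewrite (is_RInt_unique _ _ _ _ (maj_int m s a b Hs)).
  destruct (atan_bound ((b - m) / s)). destruct (atan_bound ((a - m) / s)).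
  nra.
Qed.

Lemma gauss_maj_abs m s t x : 0 < s ->
  Rabs (x - t) * gauss_pdf m s x <=
  (18 * (s + Rabs (m - t)) / (s * sqrt (2 * PI))) * / (1 + ((x - m) / s) ^ 2).
Proof.
  intros Hs. rewrite gauss_alt by lra.
  set (u := (x - m) / s).
  assert (Hx : x - t = s * u + (m - t)) by (unfold u; field; lra).
  assert (Hc := core_bd u).
  assert (HE : 0 < exp (- (u ^ 2) / 2)) by apply exp_pos.
  assert (Hq : 0 < s * sqrt (2 * PI)) by (apply Rmult_lt_0_compat; auto using s2pi_pos).
  assert (Hab : Rabs (x - t) <= (s + Rabs (m - t)) * (1 + Rabs u)).
  { rewrite Hx. eapply Rle_trans; [apply Rabs_triang|]. rewrite Rabs_mult, (Rabs_right s) by lra.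
    assert (0 <= Rabs u) by apply Rabs_pos. assert (0 <= Rabs (m - t)) by apply Rabs_pos. nra. }
  assert (Hp : 0 < 1 + u ^ 2) by (apply Rplus_lt_le_0_compat; [lra| apply pow2_ge_0]).
  unfold Rdiv. rewrite <- (Rmult_assoc (Rabs (x - t))).
  assert (H0 : 0 <= s + Rabs (m - t)) by (assert (0 <= Rabs (m - t)) by apply Rabs_pos; lra).
  apply Rle_trans with ((s + Rabs (m - t)) * ((1 + Rabs u) * exp (- u ^ 2 * / 2)) * / (s * sqrt (2 * PI))).
  - apply Rmult_le_compat_r. left; apply Rinv_0_lt_compat; auto.
    rewrite <- Rmult_assoc. apply Rmult_le_compat_r; lra.
  - unfold Rdiv in Hc.
    apply Rle_trans with ((s + Rabs (m - t)) * (18 * / (1 + u ^ 2)) * / (s * sqrt (2 * PI))).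
    + apply Rmult_le_compat_r. left; apply Rinv_0_lt_compat; auto.
      apply Rmult_le_compat_l; auto.
    + right. field. assert (Hsq := s2pi_pos). repeat split; lra.
Qed.

Lemma gauss_maj m s x : 0 < s ->
  gauss_pdf m s x <= (18 / (s * sqrt (2 * PI))) * / (1 + ((x - m) / s) ^ 2).
Proof.
  intros Hs. rewrite gauss_alt by lra.
  set (u := (x - m) / s).
  assert (Hc := core_bd u).
  assert (HE : 0 < exp (- (u ^ 2) / 2)) by apply exp_pos.
  assert (Hq : 0 < s * sqrt (2 * PI)) by (apply Rmult_lt_0_compat; auto using s2pi_pos).
  assert (Hp : 0 < 1 + u ^ 2) by (apply Rplus_lt_le_0_compat; [lra| apply pow2_ge_0]).
  assert (0 <= Rabs u) by apply Rabs_pos.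
  unfold Rdiv in *.
  apply Rle_trans with (18 * / (1 + u ^ 2) * / (s * sqrt (2 * PI))).
  - apply Rmult_le_compat_r. left; apply Rinv_0_lt_compat; auto. nra.
  - right. field. assert (Hsq := s2pi_pos). repeat split; lra.
Qed.

Lemma int_bound (f : R -> R) C m s : 0 < s -> 0 <= C ->
  (forall x, continuous f x) ->
  (forall x, f x <= C * / (1 + ((x - m) / s) ^ 2)) ->
  forall a b, a <= b -> RInt f a b <= C * (s * PI).
Proof.
  intros Hs HC Hc Hf a b Hab.
  assert (Hi : is_RInt (fun x => C * / (1 + ((x - m) / s) ^ 2)) a b
     (C * (s * atan ((b - m) / s) - s * atan ((a - m) / s)))).
  { apply (is_RInt_scal (V:=R_NormedModule) _ a b C). apply maj_int; auto. }
  apply Rle_trans with (RInt (fun x => C * / (1 + ((x - m) / s) ^ 2)) a b).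
  - apply RInt_le; auto.
    + apply (ex_RInt_continuous (V:=R_CompleteNormedModule)); auto.
    + eexists; eauto.
  - rewrite (is_RInt_unique _ _ _ _ Hi).
    destruct (atan_bound ((b - m) / s)). destruct (atan_bound ((a - m) / s)).
    apply Rmult_le_compat_l; auto. nra.
Qed.


Definition good (f : R -> R) :=
  (forall x, continuous f x) /\ (forall x, 0 <= f x) /\
  exists B, forall a b, a <= b -> RInt f a b <= B.

Definition Lf (f : R -> R) (c : R) : R := RInt_gen f (Rbar_locally m_infty) (at_point c).
Definition Rf (f : R -> R) (c : R) : R := RInt_gen f (at_point c) (Rbar_locally p_infty).

Section Good.
Variable f : R -> R.
Hypothesis Hg : good f.

Lemma good_ex a b : ex_RInt f a b.
Proof. destruct Hg as [Hc _]. exact (exf f Hc a b). Qed.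

Lemma good_L c : is_RInt_gen f (Rbar_locally m_infty) (at_point c) (Lf f c).
Proof.
  destruct Hg as [Hc [Hp [B HB]]].
  destruct (ex_minf f Hc Hp B HB c) as [L HL].
  unfold Lf. rewrite (is_RInt_gen_unique _ _ HL). exact HL.
Qed.

Lemma good_R c : is_RInt_gen f (at_point c) (Rbar_locally p_infty) (Rf f c).
Proof.
  destruct Hg as [Hc [Hp [B HB]]].
  destruct (ex_pinf f Hc Hp B HB c) as [L HL].
  unfold Rf. rewrite (is_RInt_gen_unique _ _ HL). exact HL.
Qed.

Lemma good_full_is c : is_RInt_gen f (Rbar_locally m_infty) (Rbar_locally p_infty) (Lf f c + Rf f c).
Proof.
  exact (@is_RInt_gen_Chasles R_NormedModule _ _ _ _ f c _ _ (good_L c) (good_R c)).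
Qed.

Lemma good_full c : RInt_gen f (Rbar_locally m_infty) (Rbar_locally p_infty) = Lf f c + Rf f c.
Proof. apply (is_RInt_gen_unique _ _ (good_full_is c)). Qed.

Lemma good_L_chasles s t : Lf f t = Lf f s + RInt f s t.
Proof.
  assert (H1 : is_RInt_gen f (at_point s) (at_point t) (RInt f s t)).
  { apply is_RInt_gen_at_point. apply (RInt_correct (V:=R_CompleteNormedModule)), good_ex. }
  assert (H := @is_RInt_gen_Chasles R_NormedModule _ _ _ _ f s _ _ (good_L s) H1).
  unfold Lf at 1. apply (is_RInt_gen_unique _ _ H).
Qed.

Lemma good_R_chasles s t : Rf f s = RInt f s t + Rf f t.
Proof.
  assert (H1 : is_RInt_gen f (at_point s) (at_point t) (RInt f s t)).
  { apply is_RInt_gen_at_point. apply (RInt_correct (V:=R_CompleteNormedModule)), good_ex. }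
  assert (H := @is_RInt_gen_Chasles R_NormedModule _ _ _ _ f t _ _ H1 (good_R t)).
  unfold Rf at 1. apply (is_RInt_gen_unique _ _ H).
Qed.
End Good.

Lemma good_gauss m s : 0 < s -> good (gauss_pdf m s).
Proof.
  intros Hs. split; [|split].
  - intros; apply gauss_cont; auto.
  - intros; left; apply gauss_pos; auto.
  - exists (18 / (s * sqrt (2 * PI)) * (s * PI)). apply (int_bound _ _ m s); auto.
    + assert (0 < s * sqrt (2 * PI)) by (apply Rmult_lt_0_compat; auto using s2pi_pos).
      unfold Rdiv; apply Rmult_le_pos; [lra|]. left; apply Rinv_0_lt_compat; auto.
    + intros; apply gauss_cont; auto.
    + intros; apply gauss_maj; auto.
Qed.

Lemma good_h m s t : 0 < s -> good (fun x => Rabs (x - t) * gauss_pdf m s x).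
Proof.
  intros Hs. split; [|split].
  - intros x. apply (continuous_mult (fun x => Rabs (x - t)) (gauss_pdf m s)).
    + apply continuous_Rabs_comp. apply exd_cont. auto_derive. exact I.
    + apply gauss_cont; auto.
  - intros x. apply Rmult_le_pos. apply Rabs_pos. left; apply gauss_pos; auto.
  - exists (18 * (s + Rabs (m - t)) / (s * sqrt (2 * PI)) * (s * PI)). apply (int_bound _ _ m s); auto.
    + assert (0 < s * sqrt (2 * PI)) by (apply Rmult_lt_0_compat; auto using s2pi_pos).
      assert (0 <= Rabs (m - t)) by apply Rabs_pos.
      unfold Rdiv; apply Rmult_le_pos; [nra|]. left; apply Rinv_0_lt_compat; auto.
    + intros x. apply (continuous_mult (fun x => Rabs (x - t)) (gauss_pdf m s)).
      * apply continuous_Rabs_comp. apply exd_cont. auto_derive. exact I.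
      * apply gauss_cont; auto.
    + intros; apply gauss_maj_abs; auto.
Qed.


Definition phi := gauss_pdf 0 1.
Definition Phi z := Lf phi z.

Lemma good_phi : good phi.
Proof. apply good_gauss; lra. Qed.

Lemma div_lt a b s : 0 < s -> a < b * s -> a / s < b.
Proof. intros Hs H. apply (Rmult_lt_reg_r s); auto. unfold Rdiv. rewrite Rmult_assoc, Rinv_l; lra. Qed.

Lemma subst m s a b : 0 < s ->
  RInt (gauss_pdf m s) a b = RInt phi ((a - m) / s) ((b - m) / s).
Proof.
  intros Hs.
  assert (H := RInt_comp_lin (V:=R_CompleteNormedModule) (gauss_pdf m s) s m ((a-m)/s) ((b-m)/s)
                (good_ex _ (good_gauss m s Hs) _ _)).
  replace (s * ((a - m) / s) + m) with a in H by (field; lra).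
  replace (s * ((b - m) / s) + m) with b in H by (field; lra).
  rewrite <- H. apply RInt_ext. intros x _.
  change (s * gauss_pdf m s (s * x + m) = phi x).
  unfold phi, gauss_pdf.
  replace (- (s * x + m - m) ^ 2 / (2 * s ^ 2)) with (- (x - 0) ^ 2 / (2 * 1 ^ 2)) by (field; lra).
  assert (Hq := s2pi_pos). field. split; lra.
Qed.

Lemma phi_even x : phi (- x) = phi x.
Proof. unfold phi, gauss_pdf. f_equal. f_equal. f_equal. ring. Qed.

Lemma refl a b : RInt phi a b = RInt phi (- b) (- a).
Proof.
  assert (H := RInt_comp_lin (V:=R_CompleteNormedModule) phi (-1) 0 a b
                (good_ex _ good_phi _ _)).
  assert (E1 : RInt (fun y => scal (-1) (phi (-1 * y + 0))) a b = - RInt phi a b).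
  { assert (E := RInt_opp (V:=R_CompleteNormedModule) phi a b (good_ex _ good_phi a b)).
    change (RInt (fun x => - phi x) a b = - RInt phi a b) in E. rewrite <- E.
    apply RInt_ext. intros x _.
    change (-1 * phi (-1 * x + 0) = - phi x). replace (-1 * x + 0) with (- x) by ring. rewrite phi_even. ring. }
  assert (H2 : - RInt phi a b = RInt phi (-1 * a + 0) (-1 * b + 0)) by (rewrite <- E1; exact H).
  clear H; rename H2 into H.
  replace (-1 * a + 0) with (- a) in H by ring.
  replace (-1 * b + 0) with (- b) in H by ring.
  rewrite <- (opp_RInt_swap (V:=R_CompleteNormedModule) phi (-b) (-a)) in H
    by apply (good_ex _ good_phi).
  change (- RInt phi a b = - RInt phi (-b) (-a)) in H. lra.
Qed.

Lemma Phi_lim z : lim_minf (fun a => RInt phi a z) (Phi z).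
Proof. apply lim_of_gen_minf. intros; apply (good_ex _ good_phi). apply (good_L _ good_phi). Qed.

Lemma left_eq m s t : 0 < s -> Lf (gauss_pdf m s) t = Phi ((t - m) / s).
Proof.
  intros Hs. apply is_RInt_gen_unique. apply gen_of_lim_minf.
  - intros; apply (good_ex _ (good_gauss m s Hs)).
  - intros eps Heps. destruct (Phi_lim ((t - m) / s) eps Heps) as [M HM].
    exists (M * s + m). intros a Ha. rewrite subst by auto. apply HM. apply div_lt; lra.
Qed.

Lemma right_eq m s t : 0 < s -> Rf (gauss_pdf m s) t = Phi ((m - t) / s).
Proof.
  intros Hs. apply is_RInt_gen_unique. apply gen_of_lim_pinf.
  - intros; apply (good_ex _ (good_gauss m s Hs)).
  - intros eps Heps. destruct (Phi_lim ((m - t) / s) eps Heps) as [M HM].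
    exists (m - M * s). intros b Hb. rewrite subst by auto. rewrite refl.
    replace (- ((b - m) / s)) with ((m - b) / s) by (field; lra).
    replace (- ((t - m) / s)) with ((m - t) / s) by (field; lra).
    apply HM. apply div_lt; lra.
Qed.

Lemma phi_cont x : continuous phi x.
Proof. apply gauss_cont; lra. Qed.

Lemma Phi_lt z1 z2 : z1 < z2 -> Phi z1 < Phi z2.
Proof.
  intros H. unfold Phi. rewrite (good_L_chasles _ good_phi z1 z2).
  assert (0 < RInt phi z1 z2); [|lra].
  apply RInt_gt_0; auto.
  - intros; apply gauss_pos; lra.
  - intros; apply phi_cont.
Qed.

Lemma Phi_inj z1 z2 : Phi z1 = Phi z2 -> z1 = z2.
Proof.
  intros H. destruct (Rtotal_order z1 z2) as [h|[h|h]]; auto.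
  - apply Phi_lt in h; lra.
  - apply Phi_lt in h; lra.
Qed.

Definition J z := Phi z - Phi (- z).

Lemma J_lt z1 z2 : z1 < z2 -> J z1 < J z2.
Proof.
  intros H. unfold J. assert (Phi z1 < Phi z2) by (apply Phi_lt; auto).
  assert (Phi (- z2) < Phi (- z1)) by (apply Phi_lt; lra). lra.
Qed.

Lemma J_odd z : J (- z) = - J z.
Proof. unfold J. rewrite Ropp_involutive. ring. Qed.


Definition Dc m s t := RInt_gen (fun x => Rabs (x - t) * gauss_pdf m s x)
  (Rbar_locally m_infty) (Rbar_locally p_infty).

Lemma abs_l x t r : x <= r -> t - r <= Rabs (x - t) - Rabs (x - r).
Proof.
  intros H. rewrite (Rabs_left1 (x - r)) by lra.
  assert (- (x - t) <= Rabs (x - t)) by (rewrite <- Rabs_Ropp; apply Rle_abs). lra.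
Qed.

Lemma abs_r x t r : r <= x -> r - t <= Rabs (x - t) - Rabs (x - r).
Proof.
  intros H. rewrite (Rabs_pos_eq (x - r)) by lra.
  assert ((x - t) <= Rabs (x - t)) by apply Rle_abs. lra.
Qed.

Lemma Dc_sub m s t r : 0 < s ->
  Dc m s t - Dc m s r >= (t - r) * (Lf (gauss_pdf m s) r - Rf (gauss_pdf m s) r).
Proof.
  intros Hs.
  set (g := gauss_pdf m s).
  set (ht := fun x => Rabs (x - t) * g x).
  set (hr := fun x => Rabs (x - r) * g x).
  assert (Gg : good g) by (apply good_gauss; auto).
  assert (Gt : good ht) by (apply good_h; auto).
  assert (Gr : good hr) by (apply good_h; auto).
  unfold Dc. fold g. fold ht hr.
  rewrite (good_full _ Gt r), (good_full _ Gr r).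
  assert (Hgp : forall x, 0 <= g x) by (intros; left; apply gauss_pos; auto).
  assert (HL : (t - r) * Lf g r <= Lf ht r - Lf hr r).
  { apply (gen_le (Rbar_locally m_infty) (at_point r) _ _
             (fun x => (t - r) * g x) (fun x => ht x - hr x)).
    - apply Filter_prod with (fun a => a < r) (fun b => b = r).
      + exists r; auto.
      + reflexivity.
      + intros a b Ha ->. simpl. lra.
    - apply Filter_prod with (fun a => a < r) (fun b => b = r).
      + exists r; auto.
      + reflexivity.
      + intros a b Ha ->. simpl. intros x Hx. unfold ht, hr.
        assert (H := abs_l x t r (proj2 Hx)). specialize (Hgp x). nra.
    - exact (@is_RInt_gen_scal R_NormedModule _ _ _ _ g (t - r) _ (good_L _ Gg r)).
    - exact (@is_RInt_gen_minus R_NormedModule _ _ _ _ ht hr _ _ (good_L _ Gt r) (good_L _ Gr r)). }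
  assert (HR : (r - t) * Rf g r <= Rf ht r - Rf hr r).
  { apply (gen_le (at_point r) (Rbar_locally p_infty) _ _
             (fun x => (r - t) * g x) (fun x => ht x - hr x)).
    - apply Filter_prod with (fun a => a = r) (fun b => r < b).
      + reflexivity.
      + exists r; auto.
      + intros a b -> Hb. simpl. lra.
    - apply Filter_prod with (fun a => a = r) (fun b => r < b).
      + reflexivity.
      + exists r; auto.
      + intros a b -> Hb. simpl. intros x Hx. unfold ht, hr.
        assert (H := abs_r x t r (proj1 Hx)). specialize (Hgp x). nra.
    - exact (@is_RInt_gen_scal R_NormedModule _ _ _ _ g (r - t) _ (good_R _ Gg r)).
    - exact (@is_RInt_gen_minus R_NormedModule _ _ _ _ ht hr _ _ (good_R _ Gt r) (good_R _ Gr r)). }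
  lra.
Qed.


Lemma quad_root (al be ga a b : R) : 0 < al -> a < b ->
  al * a ^ 2 + be * a + ga < 0 -> 0 <= al * b ^ 2 + be * b + ga ->
  exists c, a < c <= b /\ al * c ^ 2 + be * c + ga = 0 /\
    (forall x, a <= x < c -> al * x ^ 2 + be * x + ga < 0) /\
    (forall x, c < x -> 0 < al * x ^ 2 + be * x + ga).
Proof.
  intros Hal Hab Ha Hb.
  assert (Hcont : continuity (fun x => al * x ^ 2 + be * x + ga)).
  { apply continuity_plus; [apply continuity_plus|apply continuity_const; intros ? ?; auto].
    - apply continuity_scal. apply derivable_continuous, derivable_pow.
    - apply continuity_scal, derivable_continuous, derivable_id. }
  set (q := fun x => al * x ^ 2 + be * x + ga).
  assert (Hc : exists c, a < c <= b /\ q c = 0).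
  { destruct (Req_dec (q b) 0) as [E|E].
    - exists b; split; [lra|auto].
    - assert (Hb' : 0 < q b) by (unfold q in *; lra).
      destruct (IVT q a b Hcont Hab Ha Hb') as [z [Hz1 Hz2]].
      exists z. split; auto. destruct (Req_dec z a) as [->|]; [|lra].
      unfold q in Hz2; lra. }
  destruct Hc as [c [Hc1 Hc2]]. unfold q in Hc2.
  assert (Id : forall x, al * x ^ 2 + be * x + ga = (x - c) * (al * (x + c) + be)).
  { intros x. replace ga with (- (al * c ^ 2 + be * c)) by lra. ring. }
  assert (Hk : 0 < al * (a + c) + be).
  { rewrite Id in Ha. destruct (Rlt_dec 0 (al * (a + c) + be)); auto. nra. }
  exists c. split; auto. split; auto. split.
  - intros x Hx. rewrite Id.
    assert (0 < al * (x + c) + be) by (assert (al * a <= al * x) by (apply Rmult_le_compat_l; lra); lra).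
    assert (0 < (c - x) * (al * (x + c) + be)) by (apply Rmult_lt_0_compat; lra). lra.
  - intros x Hx. rewrite Id.
    assert (0 < al * (x + c) + be) by (assert (al * a <= al * x) by (apply Rmult_le_compat_l; lra); lra).
    apply Rmult_lt_0_compat; lra.
Qed.

Lemma min_root (F : R -> R) a b c th : a <= c <= b ->
  (forall s t, a <= s -> s < t -> t <= c -> F t < F s) ->
  (forall s t, c <= s -> s < t -> t <= b -> F s < F t) ->
  is_min_on F a b th -> th = c.
Proof.
  intros Hc Hd Hi [Hth Hmin].
  destruct (Rtotal_order th c) as [h|[h|h]]; auto.
  - assert (F c < F th) by (apply Hd; lra). assert (F th <= F c) by (apply Hmin; lra). lra.
  - assert (F c < F th) by (apply Hi; lra). assert (F th <= F c) by (apply Hmin; lra). lra.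
Qed.

Definition qg mm mp K x := (x - mm) ^ 2 / 2 - (x - mp) ^ 2 / (2 * K ^ 2) - ln K.

Lemma qg_exp mm mp K x : K <> 0 ->
  qg mm mp K x = (/ 2 - / (2 * K ^ 2)) * x ^ 2 + (- mm + mp / K ^ 2) * x +
                 (mm ^ 2 / 2 - mp ^ 2 / (2 * K ^ 2) - ln K).
Proof. intros H. unfold qg. field. auto. Qed.

Lemma gauss_ln m s x : 0 < s ->
  gauss_pdf m s x = exp (- (x - m) ^ 2 / (2 * s ^ 2) - ln s) / sqrt (2 * PI).
Proof.
  intros Hs. unfold gauss_pdf. unfold Rminus at 2. rewrite exp_plus, exp_Ropp, exp_ln by auto.
  assert (Hq := s2pi_pos). field. split; lra.
Qed.

Lemma gauss_lt m1 s1 x m2 s2 y : 0 < s1 -> 0 < s2 ->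
  - (x - m1) ^ 2 / (2 * s1 ^ 2) - ln s1 < - (y - m2) ^ 2 / (2 * s2 ^ 2) - ln s2 ->
  gauss_pdf m1 s1 x < gauss_pdf m2 s2 y.
Proof.
  intros H1 H2 H. rewrite !gauss_ln by auto.
  apply Rmult_lt_compat_r.
  - apply Rinv_0_lt_compat, s2pi_pos.
  - apply exp_increasing; auto.
Qed.

Lemma shiftm m s a b v : 0 < s ->
  RInt (gauss_pdf m s) (a + v) (b + v) = RInt (gauss_pdf (m - v) s) a b.
Proof.
  intros Hs. rewrite !subst by auto.
  replace ((a + v - m) / s) with ((a - (m - v)) / s) by (field; lra).
  replace ((b + v - m) / s) with ((b - (m - v)) / s) by (field; lra).
  reflexivity.
Qed.

Lemma Fmin_root (mm mp K a b th : R) (F : R -> R) : 1 < K -> a < b ->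
  (forall s t, F t - F s = / 2 * RInt (gauss_pdf mp K) s t - / 2 * RInt (gauss_pdf mm 1) s t) ->
  qg mm mp K a < 0 -> 0 <= qg mm mp K b -> is_min_on F a b th ->
  a < th <= b /\ qg mm mp K th = 0 /\ (forall x, a <= x < th -> qg mm mp K x < 0) /\
  (forall x, th < x -> 0 < qg mm mp K x).
Proof.
  intros HK Hab HF Ha Hb Hmin.
  assert (HK0 : K <> 0) by lra.
  rewrite !qg_exp in Ha, Hb by auto.
  assert (Hal : 0 < / 2 - / (2 * K ^ 2)).
  { assert (1 < K ^ 2) by nra.
    assert (/ (2 * K ^ 2) < / 2); [|lra]. apply Rinv_lt_contravar; nra. }
  destruct (quad_root _ _ _ a b Hal Hab Ha Hb) as [c [Hc1 [Hc2 [Hc3 Hc4]]]].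
  assert (Hcg : forall x, qg mm mp K x = (/ 2 - / (2 * K ^ 2)) * x ^ 2 + (- mm + mp / K ^ 2) * x +
                 (mm ^ 2 / 2 - mp ^ 2 / (2 * K ^ 2) - ln K)) by (intros; apply qg_exp; auto).
  assert (Hth : th = c).
  { apply (min_root F a b c th); auto; [lra| |].
    - intros s t Hs Hst Ht. rewrite <- (Rminus_lt_0 (F t) (F s)) || idtac.
      assert (RInt (gauss_pdf mp K) s t < RInt (gauss_pdf mm 1) s t); [|specialize (HF s t); lra].
      apply RInt_lt; auto.
      + intros; apply gauss_cont; lra.
      + intros; apply gauss_cont; lra.
      + intros x Hx. apply gauss_lt; try lra.
        assert (qg mm mp K x < 0) by (rewrite Hcg; apply Hc3; lra).
        unfold qg in H. rewrite ln_1. replace (2 * 1 ^ 2) with 2 by ring. lra.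
    - intros s t Hs Hst Ht.
      assert (RInt (gauss_pdf mm 1) s t < RInt (gauss_pdf mp K) s t); [|specialize (HF s t); lra].
      apply RInt_lt; auto.
      + intros; apply gauss_cont; lra.
      + intros; apply gauss_cont; lra.
      + intros x Hx. apply gauss_lt; try lra.
        assert (0 < qg mm mp K x) by (rewrite Hcg; apply Hc4; lra).
        unfold qg in H. rewrite ln_1. replace (2 * 1 ^ 2) with 2 by ring. lra. }
  subst th. split; [lra|]. split; [rewrite Hcg; auto|].
  split; intros x Hx; rewrite Hcg; [apply Hc3|apply Hc4]; auto.
Qed.


Theorem theorem6p4 (mu_m mu_p K eps theta_star theta_f theta_r : R) :
  mu_m < mu_p ->
  1 < K ->
  0 <= eps <= (mu_p - mu_m) / 2 ->
  K <= exp ((mu_p - mu_m - 2 * eps) ^ 2 / 2) ->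
  (eps = 0 \/ K <= (mu_p - mu_m) / eps - 1) ->
  is_min_on (R_nat mu_m mu_p K) mu_m mu_p theta_star ->
  (mu_m <= theta_f <= mu_p /\ e_pos mu_p K theta_f = e_neg mu_m theta_f) ->
  is_min_on (R_rob mu_m mu_p K eps) mu_m mu_p theta_r ->
  (avg_dist mu_m mu_p K theta_r >= avg_dist mu_m mu_p K theta_star /\
   avg_dist mu_m mu_p K theta_star >= avg_dist mu_m mu_p K theta_f) /\
  (forall t, mu_m <= t <= mu_p ->
     avg_dist mu_m mu_p K theta_f <= avg_dist mu_m mu_p K t /\
     (avg_dist mu_m mu_p K t <= avg_dist mu_m mu_p K theta_f -> t = theta_f)).
Proof.
  intros Hmu HK [He0 He1] HKexp Hdisj Hstar [Hf1 Hf2] Hrob.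
  assert (HK0 : 0 < K) by lra.
  assert (H10 : 0 < 1) by lra.
  assert (HlnK : 0 < ln K) by (rewrite <- ln_1; apply ln_increasing; lra).
  assert (HlnK2 : ln K <= (mu_p - mu_m - 2 * eps) ^ 2 / 2).
  { rewrite <- (ln_exp ((mu_p - mu_m - 2 * eps) ^ 2 / 2)).
    destruct (Req_dec K (exp ((mu_p - mu_m - 2 * eps) ^ 2 / 2))) as [E|E].
    - rewrite E; lra.
    - left; apply ln_increasing; lra. }
  assert (HKe : K * eps <= mu_p - mu_m - eps).
  { destruct Hdisj as [->|H]. lra. destruct (Req_dec eps 0) as [->|Hn]. lra.
    assert (0 < eps) by lra.
    apply (Rmult_le_compat_r eps) in H; [|lra].
    replace (((mu_p - mu_m) / eps - 1) * eps) with (mu_p - mu_m - eps) in H by (field; lra). lra. }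
  set (gp := gauss_pdf mu_p K). set (gm := gauss_pdf mu_m 1).
  assert (Ggp : good gp) by (apply good_gauss; auto).
  assert (Ggm : good gm) by (apply good_gauss; auto).
  assert (HFn : forall s t, R_nat mu_m mu_p K t - R_nat mu_m mu_p K s =
     / 2 * RInt (gauss_pdf mu_p K) s t - / 2 * RInt (gauss_pdf mu_m 1) s t).
  { intros s t.
    change (/ 2 * Lf gp t + / 2 * Rf gm t - (/ 2 * Lf gp s + / 2 * Rf gm s) =
            / 2 * RInt gp s t - / 2 * RInt gm s t).
    rewrite (good_L_chasles _ Ggp s t), (good_R_chasles _ Ggm s t). ring. }
  assert (HFr : forall s t, R_rob mu_m mu_p K eps t - R_rob mu_m mu_p K eps s =
     / 2 * RInt (gauss_pdf (mu_p - eps) K) s t - / 2 * RInt (gauss_pdf (mu_m + eps) 1) s t).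
  { intros s t.
    change (/ 2 * Lf gp (t + eps) + / 2 * Rf gm (t - eps) - (/ 2 * Lf gp (s + eps) + / 2 * Rf gm (s - eps)) =
            / 2 * RInt (gauss_pdf (mu_p - eps) K) s t - / 2 * RInt (gauss_pdf (mu_m + eps) 1) s t).
    rewrite (good_L_chasles _ Ggp (s + eps) (t + eps)), (good_R_chasles _ Ggm (s - eps) (t - eps)).
    unfold gp, gm. rewrite shiftm by auto.
    replace (s - eps) with (s + - eps) by ring. replace (t - eps) with (t + - eps) by ring.
    rewrite shiftm by auto. replace (mu_m - - eps) with (mu_m + eps) by ring. ring. }
  assert (HK2 : 1 < K ^ 2) by nra.
  assert (Eq1 : forall u, u ^ 2 / (2 * K ^ 2) = (u / K) ^ 2 / 2) by (intros; field; lra).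
  assert (Qa : qg mu_m mu_p K mu_m < 0).
  { unfold qg. rewrite Eq1. replace (mu_m - mu_m) with 0 by ring.
    assert (0 <= (( mu_m - mu_p) / K) ^ 2) by apply pow2_ge_0. nra. }
  assert (Qb : 0 <= qg mu_m mu_p K mu_p).
  { unfold qg. rewrite Eq1. replace (mu_p - mu_p) with 0 by ring. nra. }
  assert (Ra : qg (mu_m + eps) (mu_p - eps) K mu_m < 0).
  { unfold qg. rewrite Eq1.
    assert (eps <= (mu_p - mu_m - eps) / K).
    { apply (Rmult_le_reg_r K); auto. replace ((mu_p - mu_m - eps) / K * K) with (mu_p - mu_m - eps) by (field; lra). lra. }
    replace ((mu_m - (mu_p - eps)) / K) with (- ((mu_p - mu_m - eps) / K)) by (field; lra).
    replace (mu_m - (mu_m + eps)) with (- eps) by ring. nra. }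
  assert (Rb : 0 <= qg (mu_m + eps) (mu_p - eps) K mu_p).
  { unfold qg. rewrite Eq1.
    replace (mu_p - (mu_p - eps)) with eps by ring.
    assert (Hw : (eps / K) ^ 2 <= eps ^ 2).
    { assert (0 <= eps / K <= eps); [|nra]. split.
      - apply Rdiv_le_0_compat; lra.
      - apply (Rmult_le_reg_r K); auto. replace (eps / K * K) with eps by (field; lra). nra. }
    nra. }
  destruct (Fmin_root mu_m mu_p K mu_m mu_p theta_star _ HK Hmu HFn Qa Qb Hstar)
    as [Hs1 [Hs2 [Hs3 Hs4]]].
  destruct (Fmin_root (mu_m + eps) (mu_p - eps) K mu_m mu_p theta_r _ HK Hmu HFr Ra Rb Hrob)
    as [Hr1 [Hr2 [Hr3 Hr4]]].
  assert (Hf : (theta_f - mu_p) / K = (mu_m - theta_f) / 1).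
  { apply Phi_inj. rewrite <- left_eq, <- right_eq by auto. exact Hf2. }
  set (w := (theta_f - mu_p) / K) in Hf.
  assert (Ew1 : theta_f - mu_m = - w) by (rewrite Hf; field).
  assert (Ew2 : theta_f - mu_p = K * w) by (unfold w; field; lra).
  assert (Qf : qg mu_m mu_p K theta_f < 0).
  { unfold qg. rewrite Ew1, Ew2, Eq1. replace (K * w / K) with w by (field; lra). nra. }
  assert (Hfs : theta_f < theta_star).
  { destruct (Rtotal_order theta_star theta_f) as [h|[h|h]]; auto.
    - assert (0 < qg mu_m mu_p K theta_f) by (apply Hs4; auto). lra.
    - subst; lra. }
  assert (Hsr : theta_star <= theta_r).
  { apply Rnot_lt_le. intro h.
    assert (Hpos : 0 < qg (mu_m + eps) (mu_p - eps) K theta_star) by (apply Hr4; auto).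
    set (y := theta_star - mu_m) in *. set (d := mu_p - mu_m) in *.
    assert (Id : 2 * K ^ 2 * (qg (mu_m + eps) (mu_p - eps) K theta_star - qg mu_m mu_p K theta_star) =
              eps * (K ^ 2 * eps - 2 * K ^ 2 * y + 2 * (d - y) - eps)).
    { unfold qg, y, d. field. lra. }
    assert (Hyd : d <= y * (1 + K)).
    { assert (d = - w * (1 + K)) by (unfold d; lra).
      assert (- w < y) by (unfold y; lra). nra. }
    assert (P1 : 0 <= (K - 1) * (d - eps * (K + 1))) by (apply Rmult_le_pos; lra).
    assert (P2 : 0 <= (K + 1) * (y * (1 + K) - d)) by (apply Rmult_le_pos; lra).
    assert (P3 : 0 <= y * (K - 1) ^ 2) by (apply Rmult_le_pos; [unfold y; lra| apply pow2_ge_0]).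
    assert (Br : K ^ 2 * eps - 2 * K ^ 2 * y + 2 * (d - y) - eps <= 0) by nra.
    assert (eps * (K ^ 2 * eps - 2 * K ^ 2 * y + 2 * (d - y) - eps) <= 0) by nra.
    rewrite Hs2 in Id. nra. }
  set (A := avg_dist mu_m mu_p K).
  assert (EA : forall t, A t = / 2 * Dc mu_m 1 t + / 2 * Dc mu_p K t) by (intros; reflexivity).
  set (S := fun r => / 2 * (J ((r - mu_m) / 1) + J ((r - mu_p) / K))).
  assert (LR : forall m s r, 0 < s -> Lf (gauss_pdf m s) r - Rf (gauss_pdf m s) r = J ((r - m) / s)).
  { intros m s r Hs. rewrite left_eq, right_eq by auto. unfold J.
    replace ((m - r) / s) with (- ((r - m) / s)) by (field; lra). reflexivity. }
  assert (Hsub : forall t r, A t - A r >= (t - r) * S r).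
  { intros t r. rewrite !EA. unfold S.
    assert (D1 := Dc_sub mu_m 1 t r H10). assert (D2 := Dc_sub mu_p K t r HK0).
    rewrite LR in D1, D2 by auto.
    set (X1 := J ((r - mu_m) / 1)) in *. set (X2 := J ((r - mu_p) / K)) in *.
    replace ((t - r) * (/ 2 * (X1 + X2))) with (/ 2 * ((t - r) * X1) + / 2 * ((t - r) * X2)) by ring.
    lra. }
  assert (S0 : S theta_f = 0).
  { unfold S. fold w. rewrite Hf. replace ((mu_m - theta_f) / 1) with (- ((theta_f - mu_m) / 1)) by field.
    rewrite J_odd. ring. }
  assert (Sp : forall r, theta_f < r -> 0 < S r).
  { intros r h. rewrite <- S0. unfold S.
    assert (J ((theta_f - mu_m) / 1) < J ((r - mu_m) / 1)) by (apply J_lt; lra).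
    assert (J ((theta_f - mu_p) / K) < J ((r - mu_p) / K)).
    { apply J_lt. unfold Rdiv. apply Rmult_lt_compat_r; [apply Rinv_0_lt_compat|]; lra. }
    lra. }
  assert (Sn : forall r, r < theta_f -> S r < 0).
  { intros r h. rewrite <- S0. unfold S.
    assert (J ((r - mu_m) / 1) < J ((theta_f - mu_m) / 1)) by (apply J_lt; lra).
    assert (J ((r - mu_p) / K) < J ((theta_f - mu_p) / K)).
    { apply J_lt. unfold Rdiv. apply Rmult_lt_compat_r; [apply Rinv_0_lt_compat|]; lra. }
    lra. }
  assert (Amin : forall t, A theta_f <= A t).
  { intros t. assert (H := Hsub t theta_f). rewrite S0 in H. lra. }
  split; [split|].
  - assert (H := Hsub theta_r theta_star). assert (0 < S theta_star) by (apply Sp; auto).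
    assert (0 <= (theta_r - theta_star) * S theta_star) by (apply Rmult_le_pos; lra). fold A. lra.
  - fold A. apply Rle_ge, Amin.
  - intros t Ht. fold A. split; [apply Amin|].
    intros Hle. apply NNPP. intro Hne.
    set (m := (t + theta_f) / 2).
    assert (H := Hsub t m). assert (H2 := Amin m).
    assert (0 < (t - m) * S m).
    { destruct (Rtotal_order t theta_f) as [h|[h|h]]; [| contradiction |].
      - assert (S m < 0) by (apply Sn; unfold m; lra).
        assert (t - m < 0) by (unfold m; lra). nra.
      - assert (0 < S m) by (apply Sp; unfold m; lra).
        assert (0 < t - m) by (unfold m; lra). nra. }
    lra.
Qed.
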